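(* Let $r,s$ be nonzero complex numbers with $r\neq \pm1$, put $\lambda=r-r^{-1}$, and fix logarithms $\ln r,\ln s$. Let $U$ be a (suitably completed) algebra containing elements $\tilde A,\tilde B,\tilde C,\tilde D,\tilde F$ satisfying $[\tilde A,\tilde B]=\tilde B$, $[\tilde A,\tilde C]=-\tilde C$, $[\tilde D,\tilde B]=-\tilde B$, $[\tilde D,\tilde C]=\tilde C$, $[\tilde A,\tilde D]=0$, and $\tilde F$ central, in which expressions $x^{X}:=\exp(X\ln x)$ ($x\in\{r,s\}$, $X$ a linear combination of $\tilde A,\tilde D,\tilde F,1$) make sense. Put $H_1=\tilde A+\tilde D$, $H_2=\tilde A-\tilde D$ and $J=s^{-\frac12(\tilde F-H_2-1)}r^{\frac12(\tilde F-H_1+1)}$, $M=s^{-\frac12(\tilde F-H_1+1)}r^{\frac12(-\tilde F+H_2+1)}$, $N=s^{-\frac12(\tilde F+H_1-1)}r^{\frac12(-\tilde F-H_2+1)}$, $J'=s^{-\frac12(\tilde F-H_2-1)}r^{-\frac12(\tilde F-H_1+1)}$, $M'=s^{-\frac12(\tilde F-H_1+1)}r^{-\frac12(-\tilde F+H_2+1)}$, $N'=s^{-\frac12(\tilde F+H_1-1)}r^{-\frac12(-\tilde F-H_2+1)}$, $P=\lambda\tilde C$, $Q=-\lambda\tilde B$. Then $J,M,N,J',M',N'$ pairwise commute and $PJ=sJP$, $PJ'=sJ'P$, $JQ=sQJ$, $J'Q=sQJ'$, $PM=rMP$, $NP=rPN$, $QM'=rM'Q$, $N'Q=rQN'$.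 Furthermore, the relation $QP-PQ=-\lambda(N'M-NM')$ holds if and only if $$[\tilde B,\tilde C]=\frac{s^{-\tilde F}\left(r^{\tilde A-\tilde D}-r^{-(\tilde A-\tilde D)}\right)}{r-r^{-1}}.$$
   Context: These elements are the nonzero entries of the matrices $\mathcal{L}^{+}=\begin{pmatrix}J&0&0\\0&M&P\\0&0&N\end{pmatrix}$, $\mathcal{L}^{-}=\begin{pmatrix}J'&0&0\\0&M'&0\\0&Q&N'\end{pmatrix}$ (up to scalar factors), which generate the algebra dual to the biparametric deformation $\mathcal{A}_{r,s}$ of $GL(2)\otimes GL(1)$; the listed relations are the component form of the $R\mathcal{L}\mathcal{L}$ relations. *)

(* Defs.v *)
From HB Require Import structures.
From mathcomp Require Import all_boot all_order all_algebra.
From mathcomp Require Import reals.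
From mathcomp.analysis Require Import sequences exp trigo.
From mathcomp.real_closed Require Import complex.
Set Implicit Arguments. Unset Strict Implicit. Unset Printing Implicit Defensive.
Import Order.TTheory GRing.Theory Num.Theory.
Local Open Scope ring_scope.

Definition cexp (R : realType) (z : R[i]) : R[i] :=
  ((expR (complex.Re z))%:C * (cos (complex.Im z) +i* sin (complex.Im z)))%C.

Definition comm (K : comNzRingType) (U : algType K) (X Y : U) : U := X * Y - Y * X.

Definition inW (K : comNzRingType) (U : algType K) (A D F X : U) : Prop :=
  exists a d f c : K, X = a *: A + d *: D + f *: F + c%:A.

(* "Expressions x^X := exp(X ln x) make sense" for X in span(A, D, F, 1):
   E : U -> U is an exponential map on that (commutative) subspace, i.e. it
   satisfies the identities the exponential series satisfies in any
   completion where it converges: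
   - E (X + Y) = E X * E Y  for X, Y in the span (they commute);
   - E (c 1) = exp(c) 1  for scalars c;
   - if [X, Y] = a Y then E X * Y = Y * E (X + a 1). *)
Definition exp_map (R : realType) (U : algType R[i]) (A D F : U) (E : U -> U) : Prop :=
  [/\ (forall X Y, inW A D F X -> inW A D F Y -> E (X + Y) = E X * E Y),
      (forall c : R[i], E (c%:A) = (cexp c)%:A) &
      (forall (X Y : U) (a : R[i]), inW A D F X -> comm X Y = a *: Y ->
          E X * Y = Y * E (X + a%:A))].

(* x^X := exp(X ln x), given lx = ln x. *)
Definition pw (R : realType) (U : algType R[i]) (E : U -> U) (lx : R[i]) (X : U) : U :=
  E (lx *: X).

(* Main.v *)
Require Import Defs.
From HB Require Import structures.
From mathcomp Require Import all_boot all_order all_algebra.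
From mathcomp Require Import reals.
From mathcomp.analysis Require Import sequences exp trigo.
From mathcomp.real_closed Require Import complex.
From mathcomp Require Import ring.
Import Order.TTheory GRing.Theory Num.Theory.
Local Open Scope ring_scope.
Set Implicit Arguments. Unset Strict Implicit.

Section Aux.
Variables (R : realType) (U : algType R[i]) (A D F : U).

Lemma inW_add X Y : inW A D F X -> inW A D F Y -> inW A D F (X + Y).
Proof.
case=> a [d [f [c ->]]] [a' [d' [f' [c' ->]]]].
exists (a+a'), (d+d'), (f+f'), (c+c'); rewrite !scalerDl.
rewrite addrACA; congr (_ + _); rewrite addrACA; congr (_ + _); exact: addrACA.
Qed.

Lemma inW_scale k X : inW A D F X -> inW A D F (k *: X).
Proof.
case=> a [d [f [c ->]]]; exists (k*a), (k*d), (k*f), (k*c).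
by rewrite !scalerDr !scalerA.
Qed.

Lemma inW_opp X : inW A D F X -> inW A D F (- X).
Proof. by move=> h; rewrite -scaleN1r; apply: inW_scale. Qed.

Lemma inW_A : inW A D F A.
Proof. by exists 1, 0, 0, 0; rewrite !scale0r !addr0 scale1r. Qed.
Lemma inW_D : inW A D F D.
Proof. by exists 0, 1, 0, 0; rewrite !scale0r !addr0 add0r scale1r. Qed.
Lemma inW_F : inW A D F F.
Proof. by exists 0, 0, 1, 0; rewrite !scale0r !addr0 !add0r scale1r. Qed.
Lemma inW_1 : inW A D F 1.
Proof. by exists 0, 0, 0, 1; rewrite !scale0r !add0r scale1r. Qed.

Lemma commD (X Y Z : U) : comm (X + Y) Z = comm X Z + comm Y Z.
Proof. by rewrite /comm mulrDl mulrDr opprD addrACA. Qed.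
Lemma commZ k (X Z : U) : comm (k *: X) Z = k *: comm X Z.
Proof. by rewrite /comm -scalerAl -scalerAr -scalerBr. Qed.
Lemma commN (X Z : U) : comm (- X) Z = - comm X Z.
Proof. by rewrite /comm mulNr mulrN opprK opprB addrC. Qed.
Lemma comm1 (Z : U) : comm 1 Z = 0.
Proof. by rewrite /comm mul1r mulr1 subrr. Qed.

Lemma cexp0 : cexp (0 : R[i]) = 1.
Proof.
rewrite /cexp /= expR0 cos0 sin0.
by rewrite mul1r.
Qed.
Lemma inW_c (c : R[i]) : inW A D F (c%:A).
Proof. by exists 0, 0, 0, c; rewrite !scale0r !add0r. Qed.
End Aux.

Ltac solW := repeat first [apply inW_add | apply inW_opp | apply inW_scale
  | apply inW_A | apply inW_D | apply inW_F | apply inW_1 | apply inW_c].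

Section Main.
Variables (R : realType) (U : algType R[i]) (A D F : U) (E : U -> U).
Hypothesis hE : exp_map A D F E.

Lemma EM X Y : inW A D F X -> inW A D F Y -> E X * E Y = E (X + Y).
Proof. by case: hE => h1 _ _ hx hy; rewrite h1. Qed.

Lemma EC X Y : inW A D F X -> inW A D F Y -> E X * E Y = E Y * E X.
Proof. by move=> hx hy; rewrite !EM // addrC. Qed.

Lemma cexpD (a b : R[i]) : cexp (a + b) = cexp a * cexp b.
Proof.
case: hE => h1 h2 _.
have : (cexp (a + b))%:A = (cexp a * cexp b)%:A :> U.
  rewrite -h2 scalerDl h1; try solW.
  by rewrite !h2 mulr_algl scalerA mulrC.
move/eqP; rewrite -subr_eq0 -scalerBl scaler_eq0 oner_eq0 orbF subr_eq0.
by move/eqP.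
Qed.

Lemma cexpN (a : R[i]) : cexp a != 0 -> cexp (- a) = (cexp a)^-1.
Proof.
move=> nz; apply: (mulIf nz); rewrite mulVf // -cexpD addNr.
exact: cexp0.
Qed.

Lemma key Z Y a : inW A D F Z -> comm Z Y = a *: Y ->
  E Z * Y = cexp a *: (Y * E Z).
Proof.
move=> hz hc; case: hE => h1 h2 h3.
rewrite (h3 _ _ _ hz hc) h1 //; last by solW.
by rewrite h2 mulr_algr scalerAr.
Qed.
End Main.

Section Lin.
Variables (K : fieldType) (V : lmodType K) (x y z t : V).
Definition L (a b c d : K) := a *: x + b *: y + c *: z + d *: t.
Lemma Lx : x = L 1 0 0 0. Proof. by rewrite /L !scale0r !addr0 scale1r. Qed.
Lemma Ly : y = L 0 1 0 0. Proof. by rewrite /L !scale0r !addr0 add0r scale1r. Qed.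
Lemma Lz : z = L 0 0 1 0. Proof. by rewrite /L !scale0r !addr0 !add0r scale1r. Qed.
Lemma Lt : t = L 0 0 0 1. Proof. by rewrite /L !scale0r !add0r scale1r. Qed.
Lemma LD a b c d a' b' c' d' : L a b c d + L a' b' c' d' = L (a+a') (b+b') (c+c') (d+d').
Proof.
rewrite /L !scalerDl.
rewrite addrACA; congr (_ + _); rewrite addrACA; congr (_ + _); exact: addrACA.
Qed.
Lemma LZ k a b c d : k *: L a b c d = L (k*a) (k*b) (k*c) (k*d).
Proof. by rewrite /L !scalerDr !scalerA. Qed.
Lemma LN a b c d : - L a b c d = L (-a) (-b) (-c) (-d).
Proof. by rewrite -scaleN1r LZ !mulN1r. Qed.

Lemma id1 (ls lr : K) : (2 : K) != 0 ->
  ls *: (- 2^-1 *: (z + (x + y) - t)) + lr *: (- 2^-1 *: (- z - (x - y) + t)) +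
  (ls *: (- 2^-1 *: (z - (x + y) + t)) + lr *: (2^-1 *: (- z + (x - y) + t)))
  = ls *: (- z) + lr *: (x - y).
Proof.
move=> two; rewrite Lx Ly Lz Lt !(LN, LZ, LD); by congr L; field.
Qed.

Lemma id2 (ls lr : K) : (2 : K) != 0 ->
  ls *: (- 2^-1 *: (z + (x + y) - t)) + lr *: (2^-1 *: (- z - (x - y) + t)) +
  (ls *: (- 2^-1 *: (z - (x + y) + t)) + lr *: (- 2^-1 *: (- z + (x - y) + t)))
  = ls *: (- z) + lr *: (- (x - y)).
Proof.
move=> two; rewrite Lx Ly Lz Lt !(LN, LZ, LD); by congr L; field.
Qed.
End Lin.

Ltac normC := repeat (rewrite -scaleNr || rewrite scalerA || rewrite -scalerDl).

Theorem mainTheorem2 (R : realType) (U : algType R[i]) (r s lr ls : R[i])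
    (A B C D F : U) (E : U -> U) :
  r != 0 -> s != 0 -> r != 1 -> r != -1 ->
  cexp lr = r -> cexp ls = s ->
  comm A B = B -> comm A C = - C -> comm D B = - B -> comm D C = C ->
  comm A D = 0 -> (forall Y : U, comm F Y = 0) ->
  exp_map A D F E ->
  let lam := r - r^-1 in
  let H1 := A + D in
  let H2 := A - D in
  let J  := pw E ls (- 2^-1 *: (F - H2 - 1)) * pw E lr (2^-1 *: (F - H1 + 1)) in
  let M  := pw E ls (- 2^-1 *: (F - H1 + 1)) * pw E lr (2^-1 *: (- F + H2 + 1)) in
  let N  := pw E ls (- 2^-1 *: (F + H1 - 1)) * pw E lr (2^-1 *: (- F - H2 + 1)) in
  let J' := pw E ls (- 2^-1 *: (F - H2 - 1)) * pw E lr (- 2^-1 *: (F - H1 + 1)) in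
  let M' := pw E ls (- 2^-1 *: (F - H1 + 1)) * pw E lr (- 2^-1 *: (- F + H2 + 1)) in
  let N' := pw E ls (- 2^-1 *: (F + H1 - 1)) * pw E lr (- 2^-1 *: (- F - H2 + 1)) in
  let P := lam *: C in
  let Q := - lam *: B in
  [/\ (forall X Y : U, X \in [:: J; M; N; J'; M'; N'] ->
                       Y \in [:: J; M; N; J'; M'; N'] -> X * Y = Y * X),
      ([/\ P * J = s *: (J * P), P * J' = s *: (J' * P),
          J * Q = s *: (Q * J) & J' * Q = s *: (Q * J')]),
      ([/\ P * M = r *: (M * P), N * P = r *: (P * N),
          Q * M' = r *: (M' * Q) & N' * Q = r *: (Q * N')]) &
      ((Q * P - P * Q = - lam *: (N' * M - N * M') <->
       comm B C = lam^-1 *: (pw E ls (- F) * (pw E lr (A - D) - pw E lr (- (A - D))))))].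
Proof.
move=> r0 s0 r1 rN1 elr els hAB hAC hDB hDC hAD hF hE lam H1 H2 J M N J' M' N' P Q.
have two : (2 : R[i]) != 0 by rewrite pnatr_eq0.
have hAC' : comm A C = (-1) *: C by rewrite hAC scaleN1r.
have hDC' : comm D C = 1 *: C by rewrite hDC scale1r.
have hAB' : comm A B = 1 *: B by rewrite hAB scale1r.
have hDB' : comm D B = (-1) *: B by rewrite hDB scaleN1r.
have hFY (Y : U) : comm F Y = 0 *: Y by rewrite hF scale0r.
have h1Y (Y : U) : comm (1 : U) Y = 0 *: Y by rewrite comm1 scale0r.
pose ZJ := ls *: (- 2^-1 *: (F - H2 - 1)) + lr *: (2^-1 *: (F - H1 + 1)).
pose ZM := ls *: (- 2^-1 *: (F - H1 + 1)) + lr *: (2^-1 *: (- F + H2 + 1)).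
pose ZN := ls *: (- 2^-1 *: (F + H1 - 1)) + lr *: (2^-1 *: (- F - H2 + 1)).
pose ZJ' := ls *: (- 2^-1 *: (F - H2 - 1)) + lr *: (- 2^-1 *: (F - H1 + 1)).
pose ZM' := ls *: (- 2^-1 *: (F - H1 + 1)) + lr *: (- 2^-1 *: (- F + H2 + 1)).
pose ZN' := ls *: (- 2^-1 *: (F + H1 - 1)) + lr *: (- 2^-1 *: (- F - H2 + 1)).
have eJ : J = E ZJ by rewrite /J /pw (EM hE) //; solW.
have eM : M = E ZM by rewrite /M /pw (EM hE) //; solW.
have eN : N = E ZN by rewrite /N /pw (EM hE) //; solW.
have eJ' : J' = E ZJ' by rewrite /J' /pw (EM hE) //; solW.
have eM' : M' = E ZM' by rewrite /M' /pw (EM hE) //; solW.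
have eN' : N' = E ZN' by rewrite /N' /pw (EM hE) //; solW.
have wJ : inW A D F ZJ by rewrite /ZJ; solW.
have wM : inW A D F ZM by rewrite /ZM; solW.
have wN : inW A D F ZN by rewrite /ZN; solW.
have wJ' : inW A D F ZJ' by rewrite /ZJ'; solW.
have wM' : inW A D F ZM' by rewrite /ZM'; solW.
have wN' : inW A D F ZN' by rewrite /ZN'; solW.
have cJC : comm ZJ C = (- ls) *: C.
  rewrite /ZJ /H1 /H2 !(commD, commZ, commN) hAC' hDC' hFY h1Y; normC.
  by congr (_ *: _); field.
have cJ'C : comm ZJ' C = (- ls) *: C.
  rewrite /ZJ' /H1 /H2 !(commD, commZ, commN) hAC' hDC' hFY h1Y; normC.
  by congr (_ *: _); field.
have cMC : comm ZM C = (- lr) *: C.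
  rewrite /ZM /H1 /H2 !(commD, commZ, commN) hAC' hDC' hFY h1Y; normC.
  by congr (_ *: _); field.
have cNC : comm ZN C = lr *: C.
  rewrite /ZN /H1 /H2 !(commD, commZ, commN) hAC' hDC' hFY h1Y; normC.
  by congr (_ *: _); field.
have cJB : comm ZJ B = ls *: B.
  rewrite /ZJ /H1 /H2 !(commD, commZ, commN) hAB' hDB' hFY h1Y; normC.
  by congr (_ *: _); field.
have cJ'B : comm ZJ' B = ls *: B.
  rewrite /ZJ' /H1 /H2 !(commD, commZ, commN) hAB' hDB' hFY h1Y; normC.
  by congr (_ *: _); field.
have cM'B : comm ZM' B = (- lr) *: B.
  rewrite /ZM' /H1 /H2 !(commD, commZ, commN) hAB' hDB' hFY h1Y; normC.
  by congr (_ *: _); field.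
have cN'B : comm ZN' B = lr *: B.
  rewrite /ZN' /H1 /H2 !(commD, commZ, commN) hAB' hDB' hFY h1Y; normC.
  by congr (_ *: _); field.
have csN : cexp (- ls) = s^-1 by rewrite (cexpN hE) ?els.
have crN : cexp (- lr) = r^-1 by rewrite (cexpN hE) ?elr.
split.
- have hl : forall X, X \in [:: J; M; N; J'; M'; N'] ->
      exists Z, inW A D F Z /\ X = E Z.
    move=> X; rewrite !inE.
    by do ![case/orP=> [/eqP->|]]; [exists ZJ|exists ZM|exists ZN|exists ZJ'
       |exists ZM'|move/eqP->; exists ZN'].
  move=> X Y /hl [Z1 [w1 ->]] /hl [Z2 [w2 ->]].
  exact: (EC hE).
- split.
  + rewrite eJ /P -scalerAl -scalerAr (key hE wJ cJC) csN !scalerA.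
    by congr (_ *: _); field.
  + rewrite eJ' /P -scalerAl -scalerAr (key hE wJ' cJ'C) csN !scalerA.
    by congr (_ *: _); field.
  + rewrite eJ /Q -scalerAl -scalerAr (key hE wJ cJB) els !scalerA.
    by congr (_ *: _); field.
  + rewrite eJ' /Q -scalerAl -scalerAr (key hE wJ' cJ'B) els !scalerA.
    by congr (_ *: _); field.
- split.
  + rewrite eM /P -scalerAl -scalerAr (key hE wM cMC) crN !scalerA.
    by congr (_ *: _); field.
  + rewrite eN /P -scalerAl -scalerAr (key hE wN cNC) elr !scalerA.
    by congr (_ *: _); field.
  + rewrite eM' /Q -scalerAl -scalerAr (key hE wM' cM'B) crN !scalerA.
    by congr (_ *: _); field.
  + rewrite eN' /Q -scalerAl -scalerAr (key hE wN' cN'B) elr !scalerA.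
    by congr (_ *: _); field.
have lam0 : lam != 0.
  have e : (r - 1) * (r + 1) = r * lam by rewrite /lam; field.
  have : r * lam != 0.
    by rewrite -e mulf_neq0 // ?subr_eq0 ?addr_eq0.
  by apply: contraNneq => ->; rewrite mulr0.
have eQP : Q * P - P * Q = (- (lam * lam)) *: comm B C.
  by rewrite /Q /P /comm -!scalerAl -!scalerAr !scalerA scalerBr mulNr mulrN.
have eX : N' * M - N * M' =
    pw E ls (- F) * (pw E lr (A - D) - pw E lr (- (A - D))).
  rewrite eN' eM eN eM' !(EM hE) // /pw mulrBr !(EM hE); try solW.
  by rewrite /ZN' /ZM /ZN /ZM' /H1 /H2 id1 // id2.
rewrite eQP -eX.
have nz : - (lam * lam) != 0 by rewrite oppr_eq0 mulf_neq0.
split=> h.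
  apply: (scalerI nz); rewrite h scalerA; congr (_ *: _); field.
  by [].
by rewrite h scalerA; congr (_ *: _); field.
Qed.
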